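(* Let $(\varphi,\mathcal A,V)$ be a linear system with $\dim V=1$ (so $\varphi(a)$ is a scalar multiple of the identity for each $a$). Then the universal dilation of $(\varphi,\mathcal A,V)$ is equivalent to its principle (canonical) dilation if and only if $\ker\varphi$ contains no nonzero left ideal of $\mathcal A$.
   Context: Fix a field $\mathbb F$; all algebras and vector spaces are over $\mathbb F$, and $L(X)$ is the algebra of linear maps $X\to X$. A linear system $(\varphi,\mathcal A,V)$: $\mathcal A$ a unital associative algebra with unit $I$, $V$ a vector space, $\varphi:\mathcal A\to L(V)$ linear with $\varphi(I)=\mathrm{id}_V$. A homomorphism dilation system $(\pi,S,T,W)$: $W$ a vector space, $\pi:\mathcal A\to L(W)$ a unital homomorphism, $T:V\to W$ injective linear, $S:W\to V$ surjective linear, $\varphi(a)=S\pi(a)T$ for all $a$. Two linearly minimal systems (i.e. with $W=\mathrm{span}\{\pi(a)Tv\}$) are equivalent if there is a bijective linear $R:W_1\to W_2$ with $RT_1=T_2$, $S_2R=S_1$, $\pi_1(a)=R^{-1}\pi_2(a)R$ for all $a$. The universal dilation is $(\pi_u,S_u,T_u,\mathcal A\otimes V)$ with $\pi_u(a)(b\otimes x)=(ab)\otimes x$, $T_ux=I\otimes x$, $S_u(a\otimes x)=\varphi(a)x$. Canonical dilation: $\alpha_{a,x}\in L(\mathcal A,V)$, $\alpha_{a,x}(b)=\varphi(ba)x$; $W_c=\mathrm{span}\{\alpha_{a,x}\}$; $\pi_c(a)\alpha_{b,x}=\alpha_{ab,x}$; $T_cx=\alpha_{I,x}$; $S_c(\alpha_{a,x})=\varphi(a)x$.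 *)

(* Defs.v *)
From HB Require Import structures.
From mathcomp Require Import all_boot all_order all_algebra.
Set Implicit Arguments. Unset Strict Implicit. Unset Printing Implicit Defensive.
Import GRing.Theory.
Local Open Scope ring_scope.

Section Defs.
Variable F : fieldType.

Definition linear_system (A : algType F) (V : lmodType F) (phi : A -> V -> V) : Prop :=
  [/\ forall a, linear (phi a),
      forall (k : F) (a b : A) (v : V), phi (k *: a + b) v = k *: phi a v + phi b v
    & forall v, phi 1 v = v].

Definition dim_one (V : lmodType F) : Prop :=
  exists v0 : V, v0 != 0 /\ forall v : V, exists c : F, v = c *: v0.

Definition is_tensor_product (A V W : lmodType F) (tens : A -> V -> W) : Prop :=
  [/\ forall a, linear (tens a),
      forall x, linear (fun a => tens a x),
      forall w : W, exists s : seq (A * V), w = \sum_(p <- s) tens p.1 p.2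
    & forall (U : lmodType F) (f : A -> V -> U),
        (forall a, linear (f a)) -> (forall x, linear (fun a => f a x)) ->
        exists g : W -> U, linear g /\ (forall a x, g (tens a x) = f a x) /\
          forall g' : W -> U, linear g' -> (forall a x, g' (tens a x) = f a x) ->
            forall w, g' w = g w].

(* (pi_u, S_u, T_u, W) is the universal dilation of (phi, A, V), where
   W = A (x) V via tens, pi_u(a)(b (x) x) = (ab) (x) x, S_u(a (x) x) = phi(a)x,
   and T_u x = 1 (x) x (T_u is taken to be tens 1). *)
Definition universal_dilation (A : algType F) (V : lmodType F) (phi : A -> V -> V)
  (W : lmodType F) (tens : A -> V -> W) (pi_u : A -> W -> W) (S_u : W -> V) : Prop :=
  [/\ is_tensor_product tens,
      forall a, linear (pi_u a),
      forall a b x, pi_u a (tens b x) = tens (a * b) x,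
      linear S_u
    & forall a x, S_u (tens a x) = phi a x].

(* Canonical dilation.  alpha_{a,x}(b) = phi(ba) x.  W_c = span{alpha_{a,x}} is
   the set of functions A -> V equal (pointwise) to a finite sum of alpha's. *)
Definition alpha (A : algType F) (V : lmodType F) (phi : A -> V -> V) (a : A) (x : V) : A -> V :=
  fun b => phi (b * a) x.

Definition in_Wc (A : algType F) (V : lmodType F) (phi : A -> V -> V) (f : A -> V) : Prop :=
  exists s : seq (A * V), forall b, f b = \sum_(p <- s) alpha phi p.1 p.2 b.

(* pi_c(a) alpha_{b,x} = alpha_{ab,x}: its linear extension to W_c is
   f |-> (c |-> f (c * a)). *)
Definition pi_c (A : algType F) (V : lmodType F) (a : A) (f : A -> V) : A -> V :=
  fun c => f (c * a).
Definition T_c (A : algType F) (V : lmodType F) (phi : A -> V -> V) (x : V) : A -> V :=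
  alpha phi 1 x.
(* S_c(alpha_{a,x}) = phi(a) x = alpha_{a,x}(1): its linear extension is evaluation at 1. *)
Definition S_c (A : algType F) (V : lmodType F) (f : A -> V) : V := f 1.

(* The dilation (pi_u, S_u, T_u = tens 1, W) is equivalent to the canonical one:
   there is a linear bijection R : W -> W_c (W_c a subspace of the functions A -> V,
   equality of functions taken pointwise) with R T_u = T_c, S_c R = S_u and
   pi_u(a) = R^{-1} pi_c(a) R, i.e. R pi_u(a) = pi_c(a) R. *)
Definition equivalent_to_canonical (A : algType F) (V : lmodType F) (phi : A -> V -> V)
  (W : lmodType F) (tens : A -> V -> W) (pi_u : A -> W -> W) (S_u : W -> V) : Prop :=
  exists R : W -> A -> V,
    (forall (k : F) (w w' : W) (b : A), R (k *: w + w') b = k *: R w b + R w' b) /\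
    (forall w w' : W, (forall b, R w b = R w' b) -> w = w') /\
    (forall w : W, in_Wc phi (R w)) /\
    (forall f : A -> V, in_Wc phi f -> exists w : W, forall b, R w b = f b) /\
    (forall (x : V) (b : A), R (tens 1 x) b = T_c phi x b) /\
    (forall w : W, S_c (R w) = S_u w) /\
    (forall (a : A) (w : W) (b : A), R (pi_u a w) b = pi_c a (R w) b).

Definition left_ideal (A : algType F) (J : A -> Prop) : Prop :=
  [/\ J 0,
      forall x y, J x -> J y -> J (x + y),
      forall (k : F) x, J x -> J (k *: x)
    & forall a x, J x -> J (a * x)].

Definition in_ker (A : algType F) (V : lmodType F) (phi : A -> V -> V) (a : A) : Prop :=
  forall v, phi a v = 0.

End Defs.

(* Main.v *)
Require Import Defs.
From HB Require Import structures.
From mathcomp Require Import all_boot all_order all_algebra.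
Import GRing.Theory.
Local Open Scope ring_scope.

Section Helpers.
Variable F : fieldType.

Lemma lin0 (U V : lmodType F) (f : U -> V) : linear f -> f 0 = 0.
Proof.
move=> H; have h := H 1 0 0; rewrite !scale1r addr0 in h.
by apply: (@addrI _ (f 0)); rewrite addr0 -h.
Qed.

Lemma linD (U V : lmodType F) (f : U -> V) : linear f -> forall x y, f (x + y) = f x + f y.
Proof. by move=> H x y; have := H 1 x y; rewrite !scale1r. Qed.

Lemma linZ (U V : lmodType F) (f : U -> V) : linear f -> forall k x, f (k *: x) = k *: f x.
Proof. by move=> H k x; have := H k x 0; rewrite !addr0 (@lin0 _ _ f H) addr0. Qed.

End Helpers.
Arguments lin0 {F U V f}.
Arguments linD {F U V f}.
Arguments linZ {F U V f}.

Theorem corollary4p3 (F : fieldType) (A : algType F) (V : lmodType F)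
  (phi : A -> V -> V) (W : lmodType F) (tens : A -> V -> W)
  (pi_u : A -> W -> W) (S_u : W -> V) :
  linear_system phi -> dim_one V ->
  universal_dilation phi tens pi_u S_u ->
  (equivalent_to_canonical phi tens pi_u S_u <->
   ~ (exists J : A -> Prop,
        left_ideal J /\ (forall a, J a -> in_ker phi a) /\ exists a, J a /\ a <> 0)).
Proof.
move=> [phiL phiA phi1] [v0 [nz0 hco]] [[tL tA tspan tuniv] piL piT SL ST].
have tlin : forall x, linear (fun a : A => tens a x) := tA.
have pure : forall w, exists a, w = tens a v0.
  move=> w; have [s ->] := tspan w; elim: s => [|p s [a IH]].
    by exists 0; rewrite big_nil (lin0 (tlin v0)).
  have [c hc] := hco p.2.
  exists (c *: p.1 + a); rewrite big_cons IH hc (linZ (tL _)).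
  by rewrite (tlin v0 c p.1 a).
have phi0 : forall v, phi 0 v = 0.
  move=> v; have h := phiA 1 0 0 v; rewrite !scale1r addr0 in h.
  by apply: (@addrI _ (phi 0 v)); rewrite addr0 -h.
have phiker : forall a, phi a v0 = 0 -> forall v, phi a v = 0.
  move=> a ha v; have [c ->] := hco v; by rewrite (linZ (phiL a)) ha scaler0.
split.
- move=> [R [RL [Rinj [_ [_ [RT [_ Rpi]]]]]]] [J [[J0 JD JZ JM] [Jk [a [Ja anz]]]]].
  have R0 : forall b, R 0 b = 0.
    move=> b; have h := RL 1 0 0 b; rewrite !scale1r addr0 in h.
    by apply: (@addrI _ (R 0 b)); rewrite addr0 -h.
  have t0 : tens a v0 = 0.
    apply: Rinj => b; rewrite R0.
    have -> : tens a v0 = pi_u a (tens 1 v0) by rewrite piT mulr1.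
    rewrite Rpi /pi_c RT /T_c /alpha mulr1; exact: Jk (JM b a Ja) v0.
  have ex : forall v, exists c : F, v == c *: v0.
    by move=> v; have [c hc] := hco v; exists c; apply/eqP.
  pose coord v := xchoose (ex v).
  have coordE : forall v, v = coord v *: v0 by move=> v; exact: (eqP (xchooseP (ex v))).
  have uniq : forall c c', c *: v0 = c' *: v0 -> c = c'.
    move=> c c' /eqP; rewrite -subr_eq0 -scalerBl scaler_eq0 (negbTE nz0) orbF.
    by rewrite subr_eq0 => /eqP.
  have coordL : forall k u v, coord (k *: u + v) = k * coord u + coord v.
    move=> k u v; apply: uniq; by rewrite scalerDl -scalerA -(coordE u) -(coordE v) -(coordE (k *: u + v)).
  have h1 : forall a : A, linear (fun x : V => coord x *: a).
    by move=> b k u v /=; rewrite coordL scalerDl scalerA.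
  have h2 : forall x : V, linear (fun a : A => coord x *: a).
    by move=> x k u v /=; rewrite scalerDr !scalerA mulrC.
  have [G [GL [GT _]]] := tuniv (A : lmodType F) (fun a x => coord x *: a) h1 h2.
  have c1 : coord v0 = 1 by apply: uniq; rewrite -coordE scale1r.
  apply: anz; have := GT a v0; rewrite t0 c1 scale1r (lin0 GL) => <- //.
- move=> noJ.
  exists (fun w b => S_u (pi_u b w)).
  have Rt : forall a x b, S_u (pi_u b (tens a x)) = alpha phi a x b.
    by move=> a x b; rewrite piT ST.
  split.
    by move=> k w w' b /=; rewrite (piL b) SL.
  split.
    move=> w w' H; apply/eqP; rewrite -subr_eq0; apply/eqP.
    have [a ha] := pure (w - w').
    have hb : forall b, phi (b * a) v0 = 0.
      move=> b; rewrite -[phi _ _]/(alpha phi a v0 b) -Rt -ha.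
      by rewrite (linD (piL b)) (linD SL) -scaleN1r (linZ (piL b)) (linZ SL) H
        scaleN1r subrr.
    suff a0 : a = 0 by rewrite ha a0 (lin0 (tlin v0)).
    case: (eqVneq a 0) => // anz; exfalso; apply: noJ.
    exists (fun x => forall b, phi (b * x) v0 = 0); split; last split.
    + split.
      * by move=> b; rewrite mulr0 phi0.
      * by move=> x y hx hy b; rewrite mulrDr -[b * x]scale1r phiA scale1r hx hy addr0.
      * move=> k x hx b; rewrite -scalerAr -[_ *: _]addr0 phiA hx scaler0 add0r //.
      * by move=> c x hx b; rewrite mulrA hx.
    + by move=> x hx; apply: phiker; rewrite -[x]mul1r hx.
    + by exists a; split => //; exact/eqP.
  split.
    move=> w; have [a ->] := pure w; exists [:: (a, v0)] => b.
    by rewrite big_cons big_nil addr0 Rt.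
  split.
    move=> f [s hs]; exists (\sum_(p <- s) tens p.1 p.2) => b; rewrite hs.
    elim: s {hs} => [|p s IH].
      by rewrite !big_nil (lin0 (piL b)) (lin0 SL).
    by rewrite !big_cons (linD (piL b)) (linD SL) IH Rt.
  split.
    by move=> x b; rewrite Rt.
  split.
    by move=> w; rewrite /S_c; have [a ->] := pure w; rewrite piT mul1r.
  move=> a w b; rewrite /pi_c; have [c ->] := pure w; rewrite !piT mulrA //.
Qed.
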